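(* For the closed compartmental reaction-diffusion system $$\dot X=-\big(( *_0)^{-1}\otimes I_m\big)(\mathbf{d}\otimes I_m)^{\mathrm{T}}( *_1\otimes I_m)R_d(X)(\mathbf{d}\otimes I_m)\frac{X}{X^*}+F(X),$$ with all objects as described in the context, the positive orthant $\mathbb{R}_+^{mN}$ (vectors with all entries strictly positive) is forward invariant.
   Context: Reaction network: $m$ species, $c$ complexes, $r$ reactions; $Z$ is the $m\times c$ complex stoichiometric matrix (nonnegative integer entries); $B$ is the $c\times r$ incidence matrix of the directed complex graph; $x^*\in\mathbb{R}_+^m$ is a thermodynamic equilibrium and $\mathcal{K}(x^* )=\mathrm{diag}(\kappa_1,\dots,\kappa_r)$ with all $\kappa_j>0$. The reaction vector field is $f(x)=-ZB\mathcal{K}(x^* )B^{\mathrm{T}}\mathrm{Exp}\big(Z^{\mathrm{T}}\mathrm{Ln}(x/x^* )\big)$, with $\mathrm{Ln}$, $\mathrm{Exp}$ componentwise and $x/x^*$ the componentwise quotient (extended to $\bar{\mathbb{R}}_+^m$ via the monomial form $\prod_i(x_i/x_i^* )^{Z_{i\rho}}$). Spatial discretization: a simplicial triangulation $K$ with $N$ vertices and $N_e$ edges; $\mathbf{d}$ is the $N_e\times N$ transpose of the oriented vertex-edge incidence matrix of the 1-skeleton; $*_0$ ($N\times N$) and $*_1$ ($N_e\times N_e$) are positive diagonal matrices. $X=((x^1)^{\mathrm{T}},\dots,(x^N)^{\mathrm{T}})^{\mathrm{T}}$, $X^*=((x^* )^{\mathrm{T}},\dots,(x^* )^{\mathrm{T}})^{\mathrm{T}}$,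 $F(X)=(f(x^1)^{\mathrm{T}},\dots,f(x^N)^{\mathrm{T}})^{\mathrm{T}}$. $R_d(X)$ is an $mN_e\times mN_e$ diagonal matrix with $R_d(X)\ge\alpha I$ for some $\alpha>0$, depending continuously differentiably on $X$. *)

(* Defs.v *)
From HB Require Import structures.
From mathcomp Require Import all_boot all_order all_algebra.
From mathcomp Require Import all_classical all_reals all_analysis.
From mathcomp Require Import mxtens.

Set Implicit Arguments.
Unset Strict Implicit.
Unset Printing Implicit Defensive.

Import Order.TTheory GRing.Theory Num.Theory.
Local Open Scope ring_scope.

(* Kronecker product: (A *t B) (i*p + k, j*q + l) = A i j * B k l
   (from mathcomp-real-closed's mxtens: mxtens_index (i,k) = i * p + k). *)
Notation "A *t B" := (tensmx A B)
  (at level 40, left associativity, format "A  *t  B").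

Section Defs.
Variable R : realType.

(* M (p x q) is the incidence matrix of a directed graph with p vertices and
   q edges: column j has a +1 at the target vertex, a -1 at the source
   vertex (source <> target), and 0 elsewhere. *)
Definition is_digraph_incidence (p q : nat) (M : 'M[R]_(p, q)) : Prop :=
  forall j : 'I_q, exists (s t : 'I_p), s != t /\
    forall i : 'I_p, M i j = (i == t)%:R - (i == s)%:R.

Definition cwdiv (n : nat) (x y : 'cV[R]_n) : 'cV[R]_n :=
  map2_mx (fun a b => a / b) x y.

(* the vector Exp(Z^T Ln(x/xs)) written in its monomial form:
   component rho is prod_i (x_i / xs_i)^(Z_{i rho}) *)
Definition monomials (m c : nat) (Z : 'M[nat]_(m, c)) (xs x : 'cV[R]_m)
  : 'cV[R]_c :=
  \col_(rho < c) \prod_(i < m) (x i 0 / xs i 0) ^+ (Z i rho).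

Definition reaction_field (m c r : nat) (Z : 'M[nat]_(m, c))
  (B : 'M[R]_(c, r)) (kappa : 'rV[R]_r) (xs : 'cV[R]_m) (x : 'cV[R]_m)
  : 'cV[R]_m :=
  - (map_mx (fun k : nat => k%:R) Z *m B *m diag_mx kappa *m B^T)
      *m monomials Z xs x.

Definition block (N m : nat) (X : 'cV[R]_(N * m)) (v : 'I_N) : 'cV[R]_m :=
  \col_(i < m) X (mxtens_index (v, i)) 0.

Definition stack_apply (N m : nat) (g : 'cV[R]_m -> 'cV[R]_m)
  (X : 'cV[R]_(N * m)) : 'cV[R]_(N * m) :=
  \col_(k < N * m) g (block X (mxtens_unindex k).1) (mxtens_unindex k).2 0.

Definition stack_const (N m : nat) (xs : 'cV[R]_m) : 'cV[R]_(N * m) :=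
  \col_(k < N * m) xs (mxtens_unindex k).2 0.

Definition rd_field (m c r N Ne : nat) (Z : 'M[nat]_(m, c))
  (B : 'M[R]_(c, r)) (kappa : 'rV[R]_r) (xs : 'cV[R]_m)
  (d : 'M[R]_(Ne, N)) (s0 : 'rV[R]_N) (s1 : 'rV[R]_Ne)
  (Rd : 'cV[R]_(N * m) -> 'M[R]_(Ne * m)) (X : 'cV[R]_(N * m))
  : 'cV[R]_(N * m) :=
  - ((invmx (diag_mx s0) *t (1%:M : 'M[R]_m))
      *m (d *t (1%:M : 'M[R]_m))^T
      *m (diag_mx s1 *t (1%:M : 'M[R]_m))
      *m Rd X
      *m (d *t (1%:M : 'M[R]_m))
      *m cwdiv X (@stack_const N m xs))
  + @stack_apply N m (reaction_field Z B kappa xs) X.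

End Defs.

(* Main.v *)
Require Import Defs.
From HB Require Import structures.
From mathcomp Require Import all_boot all_order all_algebra.
From mathcomp Require Import all_classical all_reals all_analysis.
From mathcomp Require Import mxtens ring lra.
Import Order.TTheory GRing.Theory Num.Theory numFieldNormedType.Exports.
Local Open Scope ring_scope.
Local Open Scope classical_set_scope.

Section Alg.
Variable R : realType.

Lemma sum_tens p q (F : 'I_(p * q) -> R) :
  \sum_(l < p * q) F l = \sum_(a < p) \sum_(b < q) F (mxtens_index (a, b)).
Proof.
rewrite pair_big /=.
rewrite (reindex (@mxtens_index p q)) /=; last first.
  by exists (@mxtens_unindex p q) => x _; rewrite (mxtens_indexK, mxtens_unindexK).
by apply: eq_bigr => -[a b].
Qed.

Lemma tens1_mulE p1 p2 m (A : 'M[R]_(p1, p2)) (y : 'cV[R]_(p2 * m)) v i :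
  ((A *t (1%:M : 'M[R]_m)) *m y) (mxtens_index (v, i)) 0
  = \sum_(w < p2) A v w * y (mxtens_index (w, i)) 0.
Proof.
rewrite mxE sum_tens; apply: eq_bigr => w _.
rewrite (bigD1 i) //= big1 ?addr0.
  by rewrite tensmxE mxE eqxx mulr1n mulr1.
by move=> j /negbTE ji; rewrite tensmxE mxE eq_sym ji mulr0n mulr0 mul0r.
Qed.

Lemma sum_diag n (s : 'rV[R]_n) v (F : 'I_n -> R) :
  \sum_(w < n) diag_mx s v w * F w = s 0 v * F v.
Proof.
rewrite (bigD1 v) //= big1 ?addr0; first by rewrite mxE eqxx mulr1n.
by move=> w /negbTE wv; rewrite mxE eq_sym wv mulr0n mul0r.
Qed.

Lemma invmx_diag n (s : 'rV[R]_n) : (forall v, s 0 v != 0) ->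
  invmx (diag_mx s) = diag_mx (\row_v (s 0 v)^-1).
Proof.
move=> s0.
have U : diag_mx s \in unitmx.
  by rewrite unitmxE det_diag unitfE; apply/prodf_neq0 => i _.
have E : diag_mx s *m diag_mx (\row_v (s 0 v)^-1) = 1%:M.
  rewrite mulmx_diag; apply/matrixP => i j; rewrite !mxE.
  by rewrite divff.
by rewrite -[RHS]mul1mx -(mulVmx U) -mulmxA E mulmx1.
Qed.


Lemma sum_col n (F : 'I_n -> R) s t :
  \sum_(w < n) ((w == t)%:R - (w == s)%:R) * F w = F t - F s.
Proof.
under eq_bigr do rewrite mulrBl.
rewrite sumrB; congr (_ - _).
  rewrite (bigD1 t) //= eqxx mul1r big1 ?addr0 // => w /negbTE ->; exact: mul0r.
rewrite (bigD1 s) //= eqxx mul1r big1 ?addr0 // => w /negbTE ->; exact: mul0r.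
Qed.


Lemma diag_mulE n p (A : 'M[R]_n) (y : 'M[R]_(n, p)) l j : is_diag_mx A ->
  (A *m y) l j = A l l * y l j.
Proof.
move=> /is_diag_mxP dA; rewrite mxE (bigD1 l) //= big1 ?addr0 // => l' ll'.
by rewrite dA ?mul0r // eq_sym.
Qed.

Lemma inc_term n (a : 'I_n -> R) (u : 'I_n -> R) c v :
  (exists s t : 'I_n, s != t /\ forall w, a w = (w == t)%:R - (w == s)%:R) ->
  0 <= c -> (forall w, 0 <= u w) ->
  a v * (c * \sum_w a w * u w) <= c * u v.
Proof.
move=> [s [t [st dE]]] c0 u0.
under eq_bigr do rewrite dE.
rewrite sum_col dE.
have [->|vt] := eqVneq v t.
  rewrite (negbTE (_ : t != s)); last by rewrite eq_sym.
  rewrite subr0 mul1r ler_wpM2l // lerBlDr lerDl; exact: u0.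
have [->|vs] := eqVneq v s.
  rewrite sub0r mulN1r -mulrN ler_wpM2l // opprB lerBlDr lerDl.
  exact: u0.
rewrite subrr mul0r mulr_ge0 //; exact: u0.
Qed.

Lemma diffusion_le Ne N m (d : 'M[R]_(Ne, N)) (s0 : 'rV[R]_N) (s1 : 'rV[R]_Ne)
  (M : 'M[R]_(Ne * m)) (xs : 'cV[R]_m) (Y : 'cV[R]_(N * m)) v i :
  is_digraph_incidence d^T -> (forall v, 0 < s0 0 v) -> (forall e, 0 < s1 0 e) ->
  is_diag_mx M -> (forall l, 0 <= M l l) -> (forall i, 0 < xs i 0) ->
  (forall l, 0 <= Y l 0) ->
  ((invmx (diag_mx s0) *t (1%:M : 'M[R]_m)) *m (d *t (1%:M : 'M[R]_m))^T
      *m (diag_mx s1 *t (1%:M : 'M[R]_m)) *m M *m (d *t (1%:M : 'M[R]_m))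
      *m cwdiv Y (stack_const N xs)) (mxtens_index (v, i)) 0
  <= Y (mxtens_index (v, i)) 0 * ((s0 0 v)^-1 * (xs i 0)^-1 *
       \sum_e s1 0 e * M (mxtens_index (e, i)) (mxtens_index (e, i))).
Proof.
move=> dinc s0p s1p Md Mp xsp Yp.
rewrite -!mulmxA invmx_diag; last by move=> w; rewrite gt_eqF.
rewrite tens1_mulE sum_diag mxE trmx_tens trmx1 tens1_mulE.
under eq_bigr do rewrite tens1_mulE sum_diag diag_mulE // tens1_mulE.
under eq_bigr do under eq_bigr do rewrite mxE mxE mxtens_indexK /=.
apply: (@le_trans _ _ ((s0 0 v)^-1 * \sum_e ((s1 0 e * M (mxtens_index (e, i)) (mxtens_index (e, i))) * (Y (mxtens_index (v, i)) 0 / xs i 0)))).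
  apply: ler_wpM2l; first by rewrite invr_ge0 ltW.
  apply: ler_sum => e _.
  rewrite [d^T v e]mxE [s1 0 e * (_ * _)]mulrA. apply: (@inc_term _ (fun w => d e w) (fun w => Y (mxtens_index (w, i)) 0 / xs i 0)).
  - have [s [t [st dE]]] := dinc e; exists s, t; split => // w.
    by rewrite -dE mxE.
  - by rewrite mulr_ge0 // ltW.
  - by move=> w; rewrite divr_ge0 // ltW.
rewrite -mulr_suml le_eqVlt; apply/orP; left; apply/eqP; ring.
Qed.


Lemma mon_factor m c (Z : 'M[nat]_(m, c)) (xs x : 'cV[R]_m) i rho :
  (Z i rho)%:R * \prod_(l < m) (x l 0 / xs l 0) ^+ (Z l rho)
  = x i 0 * ((Z i rho)%:R * ((xs i 0)^-1 *
      \prod_(l < m) (x l 0 / xs l 0) ^+ (Z l rho - (l == i)))).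
Proof.
case E : (Z i rho) => [|k]; first by rewrite !mul0r mulr0.
rewrite (bigD1 i) //= [in RHS](bigD1 i) //= eqxx E subn1 /=.
rewrite (eq_bigr (fun l => (x l 0 / xs l 0) ^+ (Z l rho - (l == i)))); last first.
  by move=> l /negbTE ->; rewrite subn0.
rewrite exprS; ring.
Qed.
Definition qfun_dummy := 0%N.
Definition qfun m c (Z : 'M[nat]_(m, c)) (xs x : 'cV[R]_m) i rho :=
  (xs i 0)^-1 * \prod_(l < m) (x l 0 / xs l 0) ^+ (Z l rho - (l == i)).

Arguments qfun {m c}.

Lemma reaction_ge m c r (Z : 'M[nat]_(m, c)) (B : 'M[R]_(c, r)) (kappa : 'rV[R]_r)
  (xs x : 'cV[R]_m) (sB tB : 'I_r -> 'I_c) i :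
  (forall j rho, B rho j = (rho == tB j)%:R - (rho == sB j)%:R) ->
  (forall j, 0 < kappa 0 j) -> (forall i, 0 < xs i 0) -> (forall l, 0 <= x l 0) ->
  - (x i 0 * \sum_j kappa 0 j * ((Z i (tB j))%:R * qfun Z xs x i (tB j)
        + (Z i (sB j))%:R * qfun Z xs x i (sB j)))
  <= reaction_field Z B kappa xs x i 0.
Proof.
move=> BE kp xsp xp.
set mon := monomials Z xs x.
have h1 j : (diag_mx kappa *m (B^T *m mon)) j 0
    = kappa 0 j * (mon (tB j) 0 - mon (sB j) 0).
  rewrite mxE sum_diag mxE; congr (_ * _).
  under eq_bigr do rewrite mxE BE.
  exact: sum_col.
have h2 : ((map_mx (fun k : nat => k%:R) Z) *m (B *m (diag_mx kappa *m (B^T *m mon)))) i 0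
   = \sum_j ((Z i (tB j))%:R - (Z i (sB j))%:R) * (kappa 0 j * (mon (tB j) 0 - mon (sB j) 0)).
  rewrite mxE.
  under eq_bigr do rewrite mxE mxE big_distrr /=.
  rewrite exchange_big /=; apply: eq_bigr => j _.
  rewrite -h1 -(@sum_col _ (fun rho : 'I_c => (Z i rho)%:R)) big_distrl /=; apply: eq_bigr => rho _.
  by rewrite BE; ring.
rewrite /reaction_field mulNmx -!mulmxA mxE lerN2 h2 big_distrr /=.
apply: ler_sum => j _.
rewrite /qfun [X in _ <= X]mulrCA [in X in _ <= X]mulrDr -!mon_factor /mon !mxE.
set a := (Z i (tB j))%:R; set b := (Z i (sB j))%:R.
set p := \prod_(l < m) _; set q := \prod_(l < m) _.
have a0 : 0 <= a by exact: ler0n.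
have b0 : 0 <= b by exact: ler0n.
have p0 : 0 <= p by apply: prodr_ge0 => l _; rewrite exprn_ge0 // divr_ge0 // ltW.
have q0 : 0 <= q by apply: prodr_ge0 => l _; rewrite exprn_ge0 // divr_ge0 // ltW.
have k0 := kp j.
rewrite mulrCA; apply: ler_wpM2l; first exact: ltW.
nra.
Qed.

Definition Hfun m c r N Ne (Z : 'M[nat]_(m, c)) (kappa : 'rV[R]_r)
  (xs : 'cV[R]_m) (s0 : 'rV[R]_N) (s1 : 'rV[R]_Ne)
  (Rd : 'cV[R]_(N * m) -> 'M[R]_(Ne * m)) (sB tB : 'I_r -> 'I_c)
  (Y : 'cV[R]_(N * m)) v i :=
  (s0 0 v)^-1 * (xs i 0)^-1 *
       \sum_e s1 0 e * Rd Y (mxtens_index (e, i)) (mxtens_index (e, i))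
  + \sum_j kappa 0 j * ((Z i (tB j))%:R * qfun Z xs (block Y v) i (tB j)
        + (Z i (sB j))%:R * qfun Z xs (block Y v) i (sB j)).

Arguments Hfun {m c r N Ne}.

Lemma rd_field_ge m c r N Ne (Z : 'M[nat]_(m, c)) (B : 'M[R]_(c, r)) (kappa : 'rV[R]_r)
  (xs : 'cV[R]_m) (d : 'M[R]_(Ne, N)) (s0 : 'rV[R]_N) (s1 : 'rV[R]_Ne)
  (Rd : 'cV[R]_(N * m) -> 'M[R]_(Ne * m)) (sB tB : 'I_r -> 'I_c) Y v i :
  (forall j rho, B rho j = (rho == tB j)%:R - (rho == sB j)%:R) ->
  (forall j, 0 < kappa 0 j) -> (forall i, 0 < xs i 0) ->
  is_digraph_incidence d^T -> (forall v, 0 < s0 0 v) -> (forall e, 0 < s1 0 e) ->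
  is_diag_mx (Rd Y) -> (forall l, 0 <= Rd Y l l) ->
  (forall l, 0 <= Y l 0) ->
  - (Y (mxtens_index (v, i)) 0 * Hfun Z kappa xs s0 s1 Rd sB tB Y v i)
  <= rd_field Z B kappa xs d s0 s1 Rd Y (mxtens_index (v, i)) 0.
Proof.
move=> BE kp xsp dinc s0p s1p Rdd Rdp Yp.
rewrite /rd_field /Hfun mulrDr opprD mxE [stack_apply _ _ _ _]mxE mxtens_indexK /=.
apply: lerD.
  rewrite mxE lerN2; exact: diffusion_le.
have -> : Y (mxtens_index (v, i)) 0 = block Y v i 0 by rewrite mxE.
apply: reaction_ge => // l; rewrite mxE; exact: Yp.
Qed.
End Alg.
Arguments Hfun {R m c r N Ne}.
Arguments qfun {R m c}.

Section An.
Variable R : realType.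

Lemma cvg_mx_entries (T : Type) (F : set_system T) (FF : Filter F) m n
  (f : T -> 'M[R]_(m, n)) (M : 'M[R]_(m, n)) :
  (forall i j, (fun x => f x i j) @ F --> M i j) -> f @ F --> M.
Proof.
move=> H A [P MP sPA].
apply: (filterS (fun x Hx => sPA _ Hx)).
apply: filter_forall => i; apply: filter_forall => j.
exact: (H i j _ (MP i j)).
Qed.

Lemma cvgD' (T : Type) (F : set_system T) (FF : Filter F) (f g : T -> R) (a b : R) :
  f @ F --> a -> g @ F --> b -> (fun x => f x + g x) @ F --> a + b.
Proof. exact: cvgD. Qed.

Lemma cvgM' (T : Type) (F : set_system T) (FF : Filter F) (f g : T -> R) (a b : R) :
  f @ F --> a -> g @ F --> b -> (fun x => f x * g x) @ F --> a * b.
Proof. exact: cvgM. Qed.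

Lemma cvgX' (T : Type) (F : set_system T) (FF : Filter F) (f : T -> R) (a : R) n :
  f @ F --> a -> (fun x => f x ^+ n) @ F --> a ^+ n.
Proof. by move=> fa; have := cvg_comp _ _ fa (@exprn_continuous R n a). Qed.

Lemma cvg_sum' (T : Type) (F : set_system T) (FF : Filter F) n
  (f : 'I_n -> T -> R) (a : 'I_n -> R) :
  (forall i, f i @ F --> a i) -> (fun x => \sum_(i < n) f i x) @ F --> \sum_(i < n) a i.
Proof. move=> H; apply: (cvg_big add_continuous) => // i _; exact: H. Qed.

Lemma cvg_prod' (T : Type) (F : set_system T) (FF : Filter F) n
  (f : 'I_n -> T -> R) (a : 'I_n -> R) :
  (forall i, f i @ F --> a i) -> (fun x => \prod_(i < n) f i x) @ F --> \prod_(i < n) a i.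
Proof. move=> H; apply: (cvg_big mul_continuous) => // i _; exact: H. Qed.

Lemma H_cvg m c r N Ne (Z : 'M[nat]_(m, c)) (kappa : 'rV[R]_r)
  (xs : 'cV[R]_m) (s0 : 'rV[R]_N) (s1 : 'rV[R]_Ne)
  (Rd : 'cV[R]_(N * m) -> 'M[R]_(Ne * m)) (sB tB : 'I_r -> 'I_c)
  (T : Type) (F : set_system T) (FF : Filter F) (Y : T -> 'cV[R]_(N * m)) (Y0 : 'cV[R]_(N * m)) v i :
  (forall Y, differentiable Rd Y) ->
  (forall k, (fun t => Y t k 0) @ F --> Y0 k 0) ->
  (fun t => Hfun Z kappa xs s0 s1 Rd sB tB (Y t) v i) @ F
     --> Hfun Z kappa xs s0 s1 Rd sB tB Y0 v i.
Proof.
move=> dRd HY.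
have HM : Y @ F --> Y0.
  by apply: cvg_mx_entries => k j; rewrite (ord1 j); exact: HY.
have HR l : (fun t => Rd (Y t) l l) @ F --> Rd Y0 l l.
  have h1 := cvg_comp _ _ HM (differentiable_continuous (dRd Y0)).
  by have := cvg_comp _ _ h1 (@coord_continuous R _ _ l l (Rd Y0)).
have Hq rho : (fun t => qfun Z xs (block (Y t) v) i rho) @ F
    --> qfun Z xs (block Y0 v) i rho.
  rewrite /qfun; apply: cvgM'; first exact: cvg_cst.
  apply: cvg_prod' => l; apply: cvgX'; apply: cvgM'; last exact: cvg_cst.
  rewrite mxE.
  have -> : (fun t => block (Y t) v l 0) = (fun t => Y t (mxtens_index (v, l)) 0).
    by apply/funext => t; rewrite mxE.
  exact: HY.
rewrite /Hfun; apply: cvgD'.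
  apply: cvgM'; first exact: cvg_cst.
  apply: cvg_sum' => e; apply: cvgM'; first exact: cvg_cst.
  exact: HR.
apply: cvg_sum' => j; apply: cvgM'; first exact: cvg_cst.
apply: cvgD'; apply: cvgM'; (try exact: cvg_cst); exact: Hq.
Qed.
Lemma hl (G s : R) : is_derive s 1 (fun u : R => G * u) G.
Proof.
have := @is_deriveZ R R^o R^o id G s 1 1 (is_derive_id _ _).
by move=> h; apply: (is_derive_eq h); exact: mulr1.
Qed.
Lemma hE (G s : R) : is_derive s 1 (fun u : R => expR (G * u)) (expR (G * s) * G).
Proof.
exact: (@is_derive1_comp R expR (fun u => G * u) s _ _ (is_derive_expR _) (hl G s)).
Qed.
Lemma hM (f g : R -> R) (s df dg : R) : is_derive s 1 f df -> is_derive s 1 g dg ->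
  is_derive s 1 (fun u => f u * g u) (f s * dg + g s * df).
Proof. move=> h1 h2; exact: (is_deriveM h1 h2). Qed.
End An.

Theorem corollary6 (R : realType) (m c r N Ne : nat)
  (Z : 'M[nat]_(m, c)) (B : 'M[R]_(c, r)) (kappa : 'rV[R]_r)
  (xs : 'cV[R]_m) (d : 'M[R]_(Ne, N)) (s0 : 'rV[R]_N) (s1 : 'rV[R]_Ne)
  (Rd : 'cV[R]_(N * m) -> 'M[R]_(Ne * m)) (alpha : R)
  (X : R -> 'cV[R]_(N * m)) (T : R) :
  is_digraph_incidence B ->
  (forall j, 0 < kappa 0 j) ->
  (forall i, 0 < xs i 0) ->
  is_digraph_incidence d^T ->
  (forall v, 0 < s0 0 v) ->
  (forall e, 0 < s1 0 e) ->
  0 < alpha ->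
  (forall Y, is_diag_mx (Rd Y)) ->
  (forall Y k, alpha <= Rd Y k k) ->
  (forall Y, differentiable Rd Y) ->
  (forall w, continuous ('D_w Rd)) ->
  (* X is a solution on [0, T] *)
  (forall k, {within `[0, T], continuous (fun t : R => (X t k 0 : R))}) ->
  (forall t, 0 < t < T -> forall k,
      is_derive t 1 (fun s => X s k 0)
        (rd_field Z B kappa xs d s0 s1 Rd (X t) k 0)) ->
  (* starting in the positive orthant *)
  (forall k, 0 < X 0 k 0) ->
  forall t, 0 <= t <= T -> forall k, 0 < X t k 0.
Proof.
move=> Binc kp xsp dinc s0p s1p alpha0 Rdd Rda dRd _ Xc Xd X0.
have [f fP] := @choice 'I_r ('I_c * 'I_c) (fun j (p : 'I_c * 'I_c) => p.1 != p.2 /\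
     forall rho, B rho j = (rho == p.2)%:R - (rho == p.1)%:R)
  (fun j => let: ex_intro s (ex_intro t (conj st E)) := Binc j in ex_intro _ (s, t) (conj st E)).
pose sB j := (f j).1; pose tB j := (f j).2.
have BE j rho : B rho j = (rho == tB j)%:R - (rho == sB j)%:R by case: (fP j).
pose H (Y : 'cV[R]_(N * m)) v i := Hfun Z kappa xs s0 s1 Rd sB tB Y v i.
have Rdp Y l : 0 <= Rd Y l l by exact: le_trans (ltW alpha0) (Rda Y l).
have fieldge (Y : 'cV[R]_(N * m)) v i : (forall l, 0 <= Y l 0) ->
    - (Y (mxtens_index (v, i)) 0 * H Y v i)
    <= rd_field Z B kappa xs d s0 s1 Rd Y (mxtens_index (v, i)) 0.
  by move=> Yp; apply: rd_field_ge.
move=> t1 /andP[t10 t1T] k.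
have T0 : 0 <= T by exact: le_trans t10 t1T.
have Xw k' x : `[0, T] x -> (fun t => X t k' 0) @ within `[0, T] (nbhs x) --> X x k' 0.
  by move=> Ax; have /subspace_continuousP := Xc k'; apply.
have Gb v i : exists G, forall s, 0 <= s <= T -> H (X s) v i <= G.
  have hc : {within `[0, T], continuous (fun s => H (X s) v i)}.
    apply/subspace_continuousP => x Ax; apply: H_cvg => // k'; exact: Xw.
  have [c0 _ cmax] := EVT_max T0 hc.
  by exists (H (X c0) v i) => s sT; apply: cmax; rewrite in_itv.
pose A := [set t : R | 0 <= t <= T /\ forall s, 0 <= s <= t -> forall l, 0 < X s l 0].
have A0 : A 0.
  split; first by rewrite lexx T0.
  move=> s /andP[s0' s0''] l; have -> : s = 0 by apply/le_anti; rewrite s0' s0''.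
  exact: X0.
have An0 : A !=set0 by exists 0.
have Aub : ubound A T by move=> x [/andP[_ ->]].
have hub : has_ubound A by exists T.
pose a := sup A.
have a0 : 0 <= a by exact: ub_le_sup hub _ A0.
have aT : a <= T by exact: ge_sup An0 Aub.
have P1 s : 0 <= s -> s < a -> forall l, 0 < X s l 0.
  move=> s0' sa l; have [y [_ Ay] sy] := sup_gt An0 sa.
  by apply: Ay; rewrite s0' ltW.
have allk (P : 'I_(N * m) -> Prop) : (forall v i, P (mxtens_index (v, i))) -> forall l, P l.
  by move=> HP l; rewrite -[l]mxtens_unindexK; case: (mxtens_unindex l) => v i; exact: HP.
have P2 : forall l, 0 < X a l 0.
  apply: allk => v i.
  move: a0; rewrite le_eqVlt => /orP[/eqP a0|apos]; first by rewrite -a0; exact: X0.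
  have [G HG] := Gb v i.
  set kk := mxtens_index (v, i).
  pose phi s := expR (G * s) * X s kk 0.
  have phid s : 0 < s < a -> is_derive s 1 phi
      (expR (G * s) * rd_field Z B kappa xs d s0 s1 Rd (X s) kk 0
       + X s kk 0 * (expR (G * s) * G)).
    move=> /andP[s0' sa]; apply: hM; first exact: hE.
    by apply: Xd; rewrite s0' (lt_le_trans sa aT).
  have phic : {within `[0, a], continuous phi}.
    have sub : `[0, a] `<=` `[0, T].
      by move=> u; rewrite /= !in_itv /= => /andP[-> ua]; exact: le_trans ua aT.
    have Xc' := continuous_subspaceW sub (Xc kk).
    apply/subspace_continuousP => x Ax.
    apply: cvgM'; last by move/subspace_continuousP : Xc'; apply.
    apply: cvg_within_filter.
    have [dx _] := @hE R G x.
    have := differentiable_continuous (proj1 (derivable1_diffP _ _) dx).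
    exact.
  have mono : phi 0 <= phi a.
    apply: (ger0_derive1_ndecr _ _ phic (lexx 0) (ltW apos) (lexx a)).
    - by move=> x; rewrite in_itv /= => xa; case: (phid x xa).
    - move=> x; rewrite in_itv /= => xa; rewrite derive1E.
      case: (phid x xa) => _ ->.
      case/andP: xa => x0 xa.
      have Yp l : 0 <= X x l 0 by apply/ltW/P1 => //; exact: ltW.
      have hf := fieldge (X x) v i Yp.
      have hg := HG x; rewrite (ltW x0) (le_trans (ltW xa) aT) in hg.
      have hg' := hg isT.
      have xk : 0 < X x kk 0 by apply: P1 => //; exact: ltW.
      have eg := expR_gt0 (G * x).
      set E := expR (G * x) in eg *.
      set fl := rd_field _ _ _ _ _ _ _ _ _ _ _ in hf *.
      set h := H (X x) v i in hf hg hg' *.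
      have h1 : 0 <= fl + X x kk 0 * G by nra.
      have -> : E * fl + X x kk 0 * (E * G) = E * (fl + X x kk 0 * G) by ring.
      by rewrite mulr_ge0 // ltW.
  move: mono; rewrite /phi mulr0 expR0 mul1r => mono.
  have := lt_le_trans (X0 kk) mono.
  by rewrite pmulr_rgt0 // expR_gt0.
have Aa : A a.
  split; first by rewrite a0 aT.
  move=> s /andP[s0' sa] l; have [->|sa'] := eqVneq s a; first exact: P2.
  by apply: P1 => //; rewrite lt_neqAle sa' sa.
have aeT : a = T.
  apply/eqP; rewrite eq_le aT /= leNgt; apply/negP => aT'.
  have aIn : `[0, T] a by rewrite /= in_itv /= a0 aT.
  have np : \forall t \near within `[0, T] (nbhs a), forall l, 0 < X t l 0.
    apply: filter_forall => l; exact: (cvgr_gt _ (Xw l a aIn) 0 (P2 l)).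
  move: np => /nbhs_ballP [e /= e0 He].
  pose t' := Num.min (a + e / 2) T.
  have at' : a < t' by rewrite lt_min aT' andbT ltrDl divr_gt0.
  have At' : A t'.
    split.
      apply/andP; split; last by rewrite ge_min lexx orbT.
      exact: le_trans a0 (ltW at').
    move=> s /andP[s0' st] l; have [sa|sa2] := leP s a.
      by case: Aa => _; apply; rewrite s0' sa.
    apply: (He s) => //.
      have st2 : s <= a + e / 2 by apply: (le_trans st); rewrite ge_min lexx.
      rewrite -ball_normE /= ltr_norml; apply/andP; split; lra.
    by rewrite /= in_itv /= s0' (le_trans st) // ge_min lexx orbT.
  by move: (ub_le_sup hub At'); rewrite leNgt at'.
case: Aa => _; apply; by rewrite t10 aeT.
Qed.
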